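(* Let $N$ be a semi-directed network on leaf set $X$ with $|X|\ge4$. If $\{x,y,z,w\}\subseteq X$ (four distinct leaves), then $$\widetilde\rho_{xy}(N|_{xyzw})=\frac{1}{\mu(N)}\sum_{T\in\mathcal T(N)}\mu(T,N)\cdot\rho_{xy}(T|_{xyzw}).$$
   Context: A (binary) rooted phylogenetic network on $X$ is a rooted DAG whose root has in-degree 0, out-degree 2, whose leaves (in-degree 1, out-degree 0) are bijectively labeled by $X$, and whose other nodes have (in,out)-degree $(1,2)$ or $(2,1)$ (hybrid nodes), the root being the least stable ancestor of $X$. Edges into hybrid nodes are hybrid edges. A semi-directed network is obtained by undirecting all non-hybrid edges and suppressing the root. A phylogenetic tree is a semi-directed network without hybrid nodes. $T$ is displayed by $N$ if obtained by deleting exactly one hybrid edge per hybrid node, then repeatedly deleting unlabeled leaves and suppressing degree-2 nodes; $\mathcal T(N)$ is the set of displayed trees; the multiplicity $\mu(T,N)$ is the number of choices of deleted hybrid edges yielding $T$, and $\mu(N)=\sum_{T\in\mathcal T(N)}\mu(T,N)=2^r$, $r$ the number of hybrid nodes. For $Y\subseteq X$, $|Y|\ge2$, $N|_Y$ is the union of all up-down paths between leaves of $Y$ (paths that from one end first go only against edge directions and then only along them, undirected edges usable both ways), with degree-2 nodes exhaustively suppressed; $N|_{xyzw}=N|_{\{x,y,z,w\}}$, and for trees this is the induced subtree. For a quartet tree $T$ on $\{x,y,z,w\}$, $\rho_{xy}(T)=0$ if $T$ has split $\{x,y\}|\{z,w\}$, else $1$. For a semi-directed network $M$ on four leaves, $\widetilde\rho_{xy}(M)=\frac1{\mu(M)}\sum_{T\in\mathcal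 T(M)}\mu(T,M)\rho_{xy}(T)$. *)

(* Defs.v *)
From HB Require Import structures.
From mathcomp Require Import all_boot all_order all_algebra.
From mathcomp Require Import boolp.

Unset Printing Implicit Defensive.
Import GRing.Theory Num.Theory.
Local Open Scope ring_scope.

Section Networks.
Variable V : finType.

Definition indeg (R : seq (V * V)) (v : V) : nat := count (fun e => e.2 == v) R.
Definition outdeg (R : seq (V * V)) (v : V) : nat := count (fun e => e.1 == v) R.
Definition arc (R : seq (V * V)) : rel V := fun u v => (u, v) \in R.

Definition arc_avoid (R : seq (V * V)) (v : V) : rel V :=
  fun a b => [&& arc R a b, a != v & b != v].

Definition is_rooted_network (X : finType) (R : seq (V * V)) (r : V)
    (lab : X -> V) : Prop :=
  [/\ uniq R /\
      (forall u v, (u, v) \in R -> ~~ connect (arc R) v u),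
      indeg R r = 0%N /\ outdeg R r = 2%N,
      (forall v, v != r ->
         [|| (indeg R v == 1%N) && (outdeg R v == 0%N),
             (indeg R v == 1%N) && (outdeg R v == 2%N)
           | (indeg R v == 2%N) && (outdeg R v == 1%N)]),
      (injective lab /\
       forall v, (indeg R v == 1%N) && (outdeg R v == 0%N) <-> exists x, lab x = v)
      (* the root is the least stable ancestor of X: no other vertex lies on
         all root-to-leaf paths *)
    & forall v, v != r -> exists x, connect (arc_avoid R v) r (lab x)].

(* Mixed multigraphs: an edge (u, v, d) is a directed (hybrid) edge    *)
(* u -> v if d = true, and an undirected edge {u, v} if d = false.     *)

Definition medge := (V * V * bool)%type.

Definition edge_at (G : seq medge) (i : 'I_(size G)) : medge := tnth (in_tuple G) i.


(* The semi-directed network of a rooted network: undirect non-hybrid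
   arcs, suppress the root (its two incident edges are merged into one
   edge between its two children).  The root stays as an isolated
   vertex of type V, which is irrelevant for all notions below. *)
Definition sd_net (R : seq (V * V)) (r : V) : seq medge :=
  let hyb v := indeg R v == 2%N in
  let kids := [seq e.2 | e <- R & e.1 == r] in
  let c1 := nth r kids 0 in
  let c2 := nth r kids 1 in
  let merged : medge :=
    if hyb c2 then (c1, c2, true)
    else if hyb c1 then (c2, c1, true) else (c1, c2, false) in
  rcons [seq (e.1, e.2, hyb e.2) | e <- R & e.1 != r] merged.

Definition hybrid_node (G : seq medge) (v : V) : bool :=
  count (fun e : medge => e.2 && (e.1.2 == v)) G == 2%N.

Definition valid_del (G : seq medge) (D : {set 'I_(size G)}) : bool :=
  [forall i : 'I_(size G),
     (i \in D) ==> ((edge_at G i).2 && hybrid_node G (edge_at G i).1.2)]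
  && [forall v : V, hybrid_node G v ==>
        (#|[set i in D | (edge_at G i).1.2 == v]| == 1%N)].

(* mu(G) = number of choices of deleted hybrid edges
   ( = sum over displayed trees T of mu(T, G) ) *)
Definition mu (G : seq medge) : nat :=
  #|[set D : {set 'I_(size G)} | valid_del G D]|.

(* The (unpruned, unsuppressed) displayed tree obtained by deleting the
   edges of D; all remaining edges become undirected. *)
Definition display (G : seq medge) (D : {set 'I_(size G)}) : seq medge :=
  [seq ((edge_at G i).1.1, (edge_at G i).1.2, false)
  | i <- enum 'I_(size G) & i \notin D].

Definition incident (e : medge) (u v : V) : bool :=
  ((e.1.1 == u) && (e.1.2 == v)) || ((e.1.1 == v) && (e.1.2 == u)).
Definition step_down (e : medge) (u : V) : bool := e.2 && (e.1.1 == u).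
Definition step_up (e : medge) (u : V) : bool := e.2 && (e.1.2 == u).

(* A simple path a = v_0, v_1, ..., v_k = b (p = [v_1;...;v_k]) using the
   edges es (es_j joins v_j and v_(j+1)), which first only goes against
   edge directions and then only along them (undirected edges usable
   either way): no "down" step is followed by an "up" step. *)
Definition updown_path (G : seq medge) (a b : V) (p : seq V)
    (es : seq 'I_(size G)) : Prop :=
  let ee := map (edge_at G) es in
  let e0 : medge := (a, a, false) in
  [/\ uniq (a :: p), last a p = b, size es = size p,
      (forall j, (j < size p)%N ->
          incident (nth e0 ee j) (nth a (a :: p) j) (nth a p j))
    & (forall j k, (j < k < size p)%N ->
          ~~ (step_down (nth e0 ee j) (nth a (a :: p) j)
              && step_up (nth e0 ee k) (nth a (a :: p) k)))].

Definition on_updown (G : seq medge) (Y : seq V) (i : 'I_(size G)) : Prop :=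
  exists a b p es, [/\ a \in Y, b \in Y, a != b, updown_path G a b p es & i \in es].

(* G|_Y : union of all up-down paths between leaves of Y (degree-2 nodes
   are not suppressed) *)
Definition restrict (G : seq medge) (Y : seq V) : seq medge :=
  [seq edge_at G i | i <- enum 'I_(size G) & `[< on_updown G Y i >]].

Definition adj (G : seq medge) : rel V := fun u v => has (fun e => incident e u v) G.

Definition drop_edge (G : seq medge) (i : 'I_(size G)) : seq medge :=
  [seq edge_at G j | j <- enum 'I_(size G) & j != i].

Definition has_split (T : seq medge) (a b c d : V) : bool :=
  [exists i : 'I_(size T),
     [&& connect (adj (drop_edge T i)) a b,
         connect (adj (drop_edge T i)) c d
       & ~~ connect (adj (drop_edge T i)) a c]].

Definition rho (T : seq medge) (a b c d : V) : rat :=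
  if has_split T a b c d then 0 else 1.

(* rho~_xy(M) = 1/mu(M) * sum_T mu(T,M) rho_xy(T)
              = 1/mu(M) * sum over choices D of rho_xy(T_D) *)
Definition rho_tilde (M : seq medge) (a b c d : V) : rat :=
  (mu M)%:R^-1 *
  \sum_(D : {set 'I_(size M)} | valid_del M D) rho (display M D) a b c d.

End Networks.

Arguments indeg {V} R v.
Arguments outdeg {V} R v.
Arguments arc {V} R.
Arguments arc_avoid {V} R v.
Arguments is_rooted_network {V X} R r lab.
Arguments medge V : clear implicits.
Arguments edge_at {V} G i.
Arguments sd_net {V} R r.
Arguments hybrid_node {V} G v.
Arguments valid_del {V} G D.
Arguments mu {V} G.
Arguments display {V} G D.
Arguments incident {V} e u v.
Arguments step_down {V} e u.
Arguments step_up {V} e u.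
Arguments updown_path {V} G a b p es.
Arguments on_updown {V} G Y i.
Arguments restrict {V} G Y.
Arguments adj {V} G.
Arguments drop_edge {V} G i.
Arguments has_split {V} T a b c d.
Arguments rho {V} T a b c d.
Arguments rho_tilde {V} M a b c d.

(* Main.v *)
Require Import Defs.
From HB Require Import structures.
From mathcomp Require Import all_boot all_order all_algebra.
From mathcomp Require Import boolp zify ring.
Set Implicit Arguments. Unset Strict Implicit. Unset Printing Implicit Defensive.

Section Gen.
Variable V : finType.

Definition cadj n (f : 'I_n -> medge V) (p : pred 'I_n) : rel V :=
  fun u v => [exists k, p k && incident (f k) u v].

Definition splitp n (f : 'I_n -> medge V) (p : pred 'I_n) (a b c d : V) :=
  [&& connect (cadj f p) a b, connect (cadj f p) c d & ~~ connect (cadj f p) a c].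

Definition hsP n (f : 'I_n -> medge V) (p : pred 'I_n) (a b c d : V) :=
  [exists k, p k && splitp f (fun k' => p k' && (k' != k)) a b c d].

Lemma incidentC (e : medge V) u v : incident e u v = incident e v u.
Proof. by rewrite /incident orbC. Qed.

Lemma cadj_sym n (f : 'I_n -> medge V) p : symmetric (cadj f p).
Proof.
move=> u v; apply/existsP/existsP => -[k /andP[pk H]]; exists k;
  by rewrite pk incidentC.
Qed.

Lemma cadj_ext n (f g : 'I_n -> medge V) (p q : pred 'I_n) :
  (forall k, incident (f k) =2 incident (g k)) -> p =1 q ->
  connect (cadj f p) =2 connect (cadj g q).
Proof.
move=> Hfg Hpq; apply: eq_connect => u v.
apply/existsP/existsP => -[k /andP[pk H]]; exists k.
  by rewrite -Hpq pk -Hfg.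
by rewrite Hpq pk Hfg.
Qed.

Lemma cadj_mono n (f : 'I_n -> medge V) (p q : pred 'I_n) :
  (forall k, p k -> q k) -> forall u v, connect (cadj f p) u v -> connect (cadj f q) u v.
Proof.
move=> Hpq u v /connectP[s Hs ->]; apply/connectP; exists s => //.
elim: s u Hs => //= w s IH u /andP[/existsP[k /andP[pk H]] Hs].
by rewrite IH // andbT; apply/existsP; exists k; rewrite Hpq.
Qed.

Lemma splitp_ext n (f g : 'I_n -> medge V) (p q : pred 'I_n) a b c d :
  (forall k, incident (f k) =2 incident (g k)) -> p =1 q ->
  splitp f p a b c d = splitp g q a b c d.
Proof. by move=> H1 H2; rewrite /splitp !(cadj_ext H1 H2). Qed.

Lemma hsP_ext n (f g : 'I_n -> medge V) (p q : pred 'I_n) a b c d :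
  (forall k, incident (f k) =2 incident (g k)) -> p =1 q ->
  hsP f p a b c d = hsP g q a b c d.
Proof.
move=> H1 H2; apply/existsP/existsP => -[k /andP[pk H]]; exists k.
  rewrite -H2 pk /=; rewrite -(@splitp_ext _ f g (fun k' => p k' && (k' != k))) //.
  by move=> x /=; rewrite H2.
rewrite H2 pk /=; rewrite (@splitp_ext _ f g _ (fun k' => q k' && (k' != k))) //.
by move=> x /=; rewrite H2.
Qed.

Lemma edge_at_map n (f : 'I_n -> medge V) (t : seq 'I_n) (i0 : 'I_n)
   (j : 'I_(size (map f t))) : edge_at (map f t) j = f (nth i0 t j).
Proof.
rewrite /edge_at (tnth_nth (f i0)) /= (nth_map i0) //.
by rewrite -(size_map f); exact: ltn_ord.
Qed.

Lemma adj_map n (f : 'I_n -> medge V) (t : seq 'I_n) u v :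
  adj (map f t) u v = [exists k, (k \in t) && incident (f k) u v].
Proof.
rewrite /adj has_map; apply/hasP/existsP => [[k kt H]|[k /andP[kt H]]];
  by exists k; rewrite ?kt.
Qed.

Lemma adj_drop (G : seq (medge V)) i u v :
  adj (drop_edge G i) u v = [exists j, (j != i) && incident (edge_at G j) u v].
Proof.
rewrite /adj /drop_edge has_map; apply/hasP/existsP => [[j]|[j /andP[ji H]]].
  by rewrite mem_filter => /andP[ji _] H; exists j; rewrite ji.
by exists j => //; rewrite mem_filter ji mem_enum.
Qed.

Lemma has_split_map n (f : 'I_n -> medge V) (t : seq 'I_n) a b c d :
  uniq t -> has_split (map f t) a b c d = hsP f (mem t) a b c d.
Proof.
move=> ut.
have E (i : 'I_(size (map f t))) i0 : connect (adj (drop_edge (map f t) i)) =2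
     connect (cadj f (fun k' => (k' \in t) && (k' != nth i0 t i))).
  apply: eq_connect => u v; rewrite adj_drop.
  have it : i < size t by rewrite -(size_map f); exact: ltn_ord.
  apply/existsP/existsP => [[j /andP[ji H]]|[k /andP[/andP[kt ki] H]]].
    have jt : j < size t by rewrite -(size_map f); exact: ltn_ord.
    exists (nth i0 t j); rewrite mem_nth // nth_uniq //= -(edge_at_map i0) H andbT; exact: ji.
  have kt' : index k t < size (map f t) by rewrite size_map index_mem.
  exists (Ordinal kt'); rewrite (edge_at_map i0) /= nth_index // H andbT.
  apply: contra ki => /eqP <- /=; by rewrite nth_index.
apply/existsP/existsP => [[i H]|[k /andP[kt H]]].
  have it : i < size t by rewrite -(size_map f); exact: ltn_ord.
  pose i0 := nth (tnth (in_tuple t) (Ordinal it)) t i.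
  exists (nth i0 t i); apply/andP; split; first exact: mem_nth.
  by move: H; rewrite /splitp !(E i i0).
have kt' : index k t < size (map f t) by rewrite size_map index_mem.
exists (Ordinal kt'); rewrite /splitp !(E _ k) /= nth_index //.
Qed.

End Gen.

Section Sand.
Variable V : finType.
Variable n : nat.
Variable f : 'I_n -> medge V.

Lemma incidentP (e : medge V) u v :
  incident e u v -> (e.1.1 = u /\ e.1.2 = v) \/ (e.1.1 = v /\ e.1.2 = u).
Proof. by case/orP => /andP[/eqP -> /eqP ->]; [left|right]. Qed.

Lemma conn_side (p : pred 'I_n) (s : V -> bool) u v :
  (forall k, p k -> s (f k).1.1 = s (f k).1.2) ->
  connect (cadj f p) u v -> s u = s v.
Proof.
move=> Hs Hc.
have Hcl : closed (cadj f p) s.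
  move=> x y /existsP[k /andP[pk /incidentP[[<- <-]|[<- <-]]]]; rewrite /in_mem /= Hs //.
exact: (closed_connect Hcl Hc).
Qed.

Lemma connS (p : pred 'I_n) : connect_sym (cadj f p).
Proof. apply: sym_connect_sym; exact: cadj_sym. Qed.

Lemma bridge_conn (p : pred 'I_n) k0 u v :
  let p' := fun k => p k && (k != k0) in
  let t0 := (f k0).1.1 in let h0 := (f k0).1.2 in
  connect (cadj f p) u v ->
  [\/ connect (cadj f p') u v,
      connect (cadj f p') u t0 /\ connect (cadj f p') v h0
    | connect (cadj f p') u h0 /\ connect (cadj f p') v t0].
Proof.
move=> p' t0 h0 /connectP[s Hs ->].
have sy := connS p'.
elim: s u Hs => [|w s IH] u /=; first by move=> _; apply: Or31; exact: connect0.
case/andP=> /existsP[k /andP[pk Hk]] /IH.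
have [kk0|kk0] := eqVneq k k0.
  move: Hk; rewrite kk0 => /incidentP [[Eu Ew]|[Eu Ew]].
  - rewrite /t0 /h0 Eu Ew => -[H|[H1 H2]|[H1 H2]].
    + by apply: Or32; split; [exact: connect0| rewrite sy].
    + by apply: Or32; split; [exact: connect0| exact: H2].
    + by apply: Or31; rewrite sy.
  - rewrite /t0 /h0 Ew Eu => -[H|[H1 H2]|[H1 H2]].
    + by apply: Or33; split; [exact: connect0| rewrite sy].
    + by apply: Or31; rewrite sy.
    + by apply: Or33; split; [exact: connect0| exact: H2].
have Huw : connect (cadj f p') u w.
  apply: connect1; apply/existsP; exists k; by rewrite /p' pk kk0.
move=> [H|[H1 H2]|[H1 H2]].
- by apply: Or31; exact: connect_trans Huw H.
- by apply: Or32; split => //; exact: connect_trans Huw H1.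
- by apply: Or33; split => //; exact: connect_trans Huw H1.
Qed.

Lemma sandwich (K P : pred 'I_n) a b c d :
  (forall k, P k -> K k) ->
  connect (cadj f P) a b -> connect (cadj f P) c d -> connect (cadj f P) a c ->
  (forall k0, K k0 -> exists s : V -> bool,
       (forall k, K k -> k != k0 -> s (f k).1.1 = s (f k).1.2) /\
       s (f k0).1.1 != s (f k0).1.2) ->
  hsP f K a b c d = hsP f P a b c d.
Proof.
move=> PK cab ccd cac Hbr.
have key : forall k0 u v, P k0 -> connect (cadj f P) u v ->
    connect (cadj f (fun k => K k && (k != k0))) u v ->
    connect (cadj f (fun k => P k && (k != k0))) u v.
  move=> k0 u v Pk0 cP cK.
  have [s [Hs Hs0]] := Hbr k0 (PK _ Pk0).
  have side : forall x y, connect (cadj f (fun k => K k && (k != k0))) x y -> s x = s y.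
    move=> x y; apply: conn_side => k /andP[Kk kk0]; exact: Hs.
  have mono : forall x y, connect (cadj f (fun k => P k && (k != k0))) x y -> s x = s y.
    move=> x y Hxy; apply: side; apply: cadj_mono Hxy => k /andP[Pk ->];
      by rewrite PK.
  have suv := side _ _ cK.
  case: (bridge_conn k0 cP) => [//|[H1 H2]|[H1 H2]].
  - by move: Hs0; rewrite -(mono _ _ H1) -(mono _ _ H2) suv eqxx.
  - by move: Hs0; rewrite -(mono _ _ H1) -(mono _ _ H2) suv eqxx.
apply/existsP/existsP => -[k0 /andP[Kk0 /and3P[H1 H2 H3]]].
  have Pk0 : P k0.
    apply: contraNT H3 => nP; apply: cadj_mono cac => k Pk.
    by rewrite PK //=; apply: contraNneq nP => <-.
  exists k0; rewrite Pk0 /splitp (key _ _ _ Pk0 cab H1) (key _ _ _ Pk0 ccd H2) /=.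
  apply: contra H3; apply: cadj_mono => k /andP[Pk ->]; by rewrite PK.
exists k0; rewrite PK //= /splitp.
have PKk : forall k, P k && (k != k0) -> K k && (k != k0).
  by move=> k /andP[Pk ->]; rewrite PK.
rewrite (cadj_mono PKk H1) (cadj_mono PKk H2) /=.
apply: contra H3 => H; exact: key.
Qed.

End Sand.

Lemma count_enumP (T : finType) (p : pred T) : count p (enum T) = #|p|.
Proof. by rewrite enumT cardE /enum_mem size_filter. Qed.

Lemma count_split (T : Type) (a p : pred T) (s : seq T) :
  count a s = count a (filter p s) + count a (filter (predC p) s).
Proof.
elim: s => //= x s ->; case: (p x) => /=; lia.
Qed.

Lemma count_ge2 (T : eqType) (p : pred T) (s : seq T) x y :
  x != y -> x \in s -> y \in s -> p x -> p y -> 1 < count p s.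
Proof.
move=> xy xs ys px py; rewrite -size_filter.
have -> : 2 = size [:: x; y] by [].
apply: uniq_leq_size; first by rewrite /= inE xy.
by move=> z; rewrite !inE mem_filter => /orP[]/eqP->; rewrite ?px ?py.
Qed.

Lemma connect_last (T : finType) (e : rel T) x y :
  connect e x y -> x != y -> exists2 z, connect e x z & e z y.
Proof.
move=> /connectP[s]; case/lastP: s => [|s z] /=; first by move=> _ -> /eqP.
rewrite rcons_path last_rcons => /andP[Hp He] -> _.
by exists (last x s) => //; apply/connectP; exists s.
Qed.

Lemma connect_first (T : finType) (e : rel T) x y :
  connect e x y -> x != y -> exists2 z, e x z & connect e z y.
Proof.
move=> /connectP[[|z s]] /=; first by move=> _ -> /eqP.
move=> /andP[Hz Hp] -> _; exists z => //; apply/connectP; by exists s.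
Qed.

Lemma edge_at_mapT (V : finType) (T : Type) (f : T -> medge V) (t : seq T) (x0 : T)
   (j : 'I_(size (map f t))) : edge_at (map f t) j = f (nth x0 t j).
Proof.
rewrite /edge_at (tnth_nth (f x0)) /= (nth_map x0) //.
by rewrite -(size_map f); exact: ltn_ord.
Qed.

Lemma count_card (V : finType) (G : seq (medge V)) (p : pred (medge V)) :
  count p G = #|[set k : 'I_(size G) | p (edge_at G k)]|.
Proof.
transitivity (count p (map (edge_at G) (enum 'I_(size G)))).
  by rewrite /edge_at map_tnth_enum.
by rewrite count_map cardsE -count_enumP.
Qed.

Section Net.
Variables (X V : finType) (R : seq (V * V)) (r : V) (lab : X -> V).
Hypothesis Hnet : is_rooted_network R r lab.

Let uR : uniq R. Proof. by case: Hnet => [[]]. Qed.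
Let acyc : forall u v, (u, v) \in R -> ~~ connect (Defs.arc R) v u.
Proof. by case: Hnet => [[]]. Qed.
Let inr : indeg R r = 0. Proof. by case: Hnet => _ []. Qed.
Let outr : outdeg R r = 2. Proof. by case: Hnet => _ []. Qed.
Let degs : forall v, v != r ->
         [|| (indeg R v == 1%N) && (outdeg R v == 0%N),
             (indeg R v == 1%N) && (outdeg R v == 2%N)
           | (indeg R v == 2%N) && (outdeg R v == 1%N)].
Proof. by case: Hnet. Qed.
Let leafP : forall v, (indeg R v == 1%N) && (outdeg R v == 0%N) <-> exists x, lab x = v.
Proof. by case: Hnet => _ _ _ []. Qed.

Definition hybR v := indeg R v == 2.
Definition kids := [seq e.2 | e <- R & e.1 == r].
Definition c1 := nth r kids 0.
Definition c2 := nth r kids 1.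
Definition mm : V * V := if hybR c2 then (c1, c2) else if hybR c1 then (c2, c1) else (c1, c2).
Definition m1 := mm.1.
Definition m2 := mm.2.
Definition R1 := [seq e <- R | e.1 != r].
Definition R' := rcons R1 mm.
Definition fl (e : V * V) : medge V := (e.1, e.2, hybR e.2).

Lemma sdE : sd_net R r = map fl R'.
Proof.
rewrite /sd_net /R' map_rcons; congr rcons.
rewrite /mm /fl /hybR /c1 /c2 /kids /=.
case: ifP => H2 /=; first by rewrite H2.
by case: ifP => H1 /=; rewrite ?H1 ?H2.
Qed.

Lemma indeg_le2 v : indeg R v <= 2.
Proof.
case: (eqVneq v r) => [->|/degs]; first by rewrite inr.
by case/or3P => /andP[/eqP -> _].
Qed.

Lemma indeg_pos v : v != r -> 0 < indeg R v.
Proof. by move/degs; case/or3P => /andP[/eqP -> _]. Qed.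

Lemma in_arc_exists v : v != r -> exists p, (p, v) \in R.
Proof.
move/indeg_pos; rewrite /indeg -has_count => /hasP[[p w] H /eqP /= Ew].
by exists p; rewrite -Ew.
Qed.

Lemma no_arc_into_r u : (u, r) \notin R.
Proof.
apply/negP => H; move: inr; rewrite /indeg => /eqP; rewrite -leqn0 leqNgt -has_count.
by move/negP; apply; apply/hasP; exists (u, r).
Qed.

Lemma kids_mem y : ((r, y) \in R) = (y \in kids).
Proof.
apply/idP/mapP => [H|[[u w]]]; first by exists (r, y); rewrite // mem_filter eqxx.
by rewrite mem_filter /= => /andP[/eqP -> H] ->.
Qed.

Lemma kidsE : kids = [:: c1; c2].
Proof.
have : size kids = 2 by rewrite size_map size_filter.
by rewrite /c1 /c2; case: kids => [|a [|b [|]]].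
Qed.

Lemma kids_uniq : uniq kids.
Proof.
rewrite map_inj_in_uniq ?filter_uniq // => -[a b] [a' b'].
by rewrite !mem_filter /= => /andP[/eqP -> _] /andP[/eqP -> _] ->.
Qed.

Lemma c12 : c1 != c2.
Proof. by move: kids_uniq; rewrite kidsE /= inE andbT. Qed.

Lemma rc1 : (r, c1) \in R. Proof. by rewrite kids_mem kidsE inE eqxx. Qed.
Lemma rc2 : (r, c2) \in R. Proof. by rewrite kids_mem kidsE !inE eqxx orbT. Qed.

Lemma neq_of_arc u v : (u, v) \in R -> u != v.
Proof.
move=> H; apply/eqP => E; move: (acyc H); rewrite E connect0.
by [].
Qed.

Lemma c1r : c1 != r.
Proof. apply/eqP => E; have := rc1; rewrite E; apply/negP; exact: no_arc_into_r. Qed.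
Lemma c2r : c2 != r.
Proof. apply/eqP => E; have := rc2; rewrite E; apply/negP; exact: no_arc_into_r. Qed.

Lemma reach v : connect (Defs.arc R) r v.
Proof.
suff H : forall N v, #|[set u | connect (Defs.arc R) u v]| <= N -> connect (Defs.arc R) r v.
  exact: (H _ v (leqnn _)).
elim=> [|N IH] {}v.
  rewrite leqn0 => /eqP /cards0_eq /setP /(_ v).
  by rewrite !inE connect0.
move=> HN; have [->|vr] := eqVneq v r; first exact: connect0.
have [p pv] := in_arc_exists vr.
have : connect (Defs.arc R) r p.
  apply: IH; rewrite -ltnS; apply: leq_trans HN; apply: proper_card.
  apply/properP; split.
    apply/subsetP => u; rewrite !inE => H; apply: connect_trans H _.
    exact: connect1.
  by exists v; rewrite !inE ?connect0 //; exact: acyc pv.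
move=> H; apply: connect_trans H _; exact: connect1.
Qed.

Lemma hyb_other_parent v : hybR v -> (r, v) \in R -> exists2 p, (p, v) \in R & p != r.
Proof.
move=> hv rv.
have [/existsP[p /andP[pv pr]]|H] := boolP [exists p, ((p, v) \in R) && (p != r)].
  by exists p.
exfalso; move: hv; rewrite /hybR /indeg.
rewrite (@eq_in_count _ _ (pred1 (r, v))); first by rewrite count_uniq_mem // rv.
move=> [a b] ab /=; apply/eqP/eqP => [Eb|[_ ->]] //.
move/existsPn: H => H; have := H a.
by rewrite -Eb ab /= negbK => /eqP ->.
Qed.

Lemma first_kid p : p != r -> exists2 y, y \in kids & connect (Defs.arc R) y p.
Proof.
move=> pr; have := reach p; case/connect_first; first by rewrite eq_sym.
by move=> y ry yp; exists y => //; rewrite -kids_mem.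
Qed.

Lemma not_both : ~~ (hybR c1 && hybR c2).
Proof.
apply/negP => /andP[h1 h2].
have [p1 p1c1 p1r] := hyb_other_parent h1 rc1.
have [p2 p2c2 p2r] := hyb_other_parent h2 rc2.
have A1 : connect (Defs.arc R) c2 c1.
  have [y] := first_kid p1r; rewrite kidsE !inE => /orP[]/eqP -> H.
    by move: (acyc p1c1); rewrite H.
  apply: connect_trans H _; exact: connect1.
have A2 : connect (Defs.arc R) c1 p2.
  have [y] := first_kid p2r; rewrite kidsE !inE => /orP[]/eqP -> H //.
  by move: (acyc p2c2); rewrite H.
by move: (acyc p2c2); rewrite (connect_trans A1 A2).
Qed.

Lemma m_cases : (m1 = c1 /\ m2 = c2) \/ (m1 = c2 /\ m2 = c1).
Proof. by rewrite /m1 /m2 /mm; case: ifP => _; [left|case: ifP => _; [right|left]]. Qed.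

Lemma m1_nhyb : ~~ hybR m1.
Proof.
rewrite /m1 /mm; case: ifP => h2 /=.
  by move: not_both; rewrite h2 andbT.
by case: ifP => h1 /=; rewrite ?h2 ?h1.
Qed.

Lemma rm1 : (r, m1) \in R. Proof. by case: m_cases => -[-> _]; rewrite ?rc1 ?rc2. Qed.
Lemma rm2 : (r, m2) \in R. Proof. by case: m_cases => -[_ ->]; rewrite ?rc1 ?rc2. Qed.
Lemma m12 : m1 != m2. Proof. by case: m_cases => -[-> ->]; [exact: c12 | rewrite eq_sym; exact: c12]. Qed.
Lemma m1r : m1 != r. Proof. by case: m_cases => -[-> _]; rewrite ?c1r ?c2r. Qed.
Lemma m2r : m2 != r. Proof. by case: m_cases => -[_ ->]; rewrite ?c1r ?c2r. Qed.

Lemma m1_par x : (x, m1) \in R -> x = r.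
Proof.
move=> xm; apply/eqP; apply: contraT => xr.
have E1 : indeg R m1 = 1.
  by move: (degs m1r) m1_nhyb; rewrite /hybR; case/or3P => /andP[/eqP -> _].
have ne : (x, m1) != (r, m1) by rewrite xpair_eqE negb_and xr.
have := @count_ge2 _ (fun e : V * V => e.2 == m1) R (x, m1) (r, m1) ne xm rm1 (eqxx _) (eqxx _).
by rewrite -/(indeg R m1) E1.
Qed.

Lemma R'_nr e : e \in R' -> e.1 != r /\ e.2 != r.
Proof.
rewrite mem_rcons inE => /orP[/eqP Ee|].
  by rewrite Ee; split; [exact: m1r | exact: m2r].
rewrite mem_filter => /andP[H1 eR]; split => //; apply/eqP => Er.
move: (no_arc_into_r e.1); rewrite -Er -surjective_pairing eR.
by [].
Qed.

Lemma R'_no_m1 u : (u, m1) \notin R'.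
Proof.
rewrite mem_rcons inE negb_or; apply/andP; split.
  apply/eqP => E; have E2 : m2 = m1 by rewrite /m2 -E.
  by move: m12; rewrite E2 eqxx.
rewrite mem_filter /= negb_and negbK; apply/orP.
case H : ((u, m1) \in R); [by left; rewrite (m1_par H) | by right].
Qed.

Lemma R'_sub u v : (u, v) \in R' -> ((u, v) \in R) \/ (u = m1 /\ v = m2).
Proof.
rewrite mem_rcons inE => /orP[/eqP E|]; first by right; rewrite /m1 /m2 -E.
by rewrite mem_filter => /andP[_ ->]; left.
Qed.

Lemma R'_path x s : path (Defs.arc R') x s ->
  connect (Defs.arc R) x (last x s) \/ (x = m1 /\ connect (Defs.arc R) m2 (last x s)).
Proof.
elim: s x => [|y s IH] x /=; first by left; exact: connect0.
case/andP => xy /IH [H|[ym1 _]]; last by case/negP: (R'_no_m1 x); rewrite -ym1; exact: xy.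
case/R'_sub: xy => [xy|[-> Ey]]; last by right; split; rewrite // -Ey.
by left; apply: connect_trans H; exact: connect1.
Qed.

Lemma R'_acyc u v : (u, v) \in R' -> ~~ connect (Defs.arc R') v u.
Proof.
move=> uv; apply/negP => /connectP[s /R'_path Hs Eu]; rewrite -Eu in Hs.
case: Hs => [H|[vm1 _]]; last by case/negP: (R'_no_m1 u); rewrite -vm1.
case/R'_sub: uv => [uv|[um vm]]; first by move: (acyc uv); rewrite H.
rewrite um vm in H.
have m21 : m2 != m1 by rewrite eq_sym m12.
have [z Hz zm] := connect_last H m21.
have zr := m1_par zm; rewrite zr in Hz.
have [z' _ z'r] := connect_last Hz m2r.
by case/negP: (no_arc_into_r z').
Qed.

Lemma R'_root v : v != r -> (forall u, (u, v) \notin R') -> v = m1.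
Proof.
move=> vr Hv; have [p pv] := in_arc_exists vr.
have pr : p = r.
  apply/eqP; apply: contraT => pr; case/negP: (Hv p).
  by rewrite mem_rcons inE mem_filter /= pr pv orbT.
subst p; move: pv; rewrite kids_mem kidsE !inE.
have : v != m2.
  apply/eqP => vm2; case/negP: (Hv m1); rewrite vm2 mem_rcons inE.
  by rewrite /m1 /m2 -surjective_pairing eqxx.
by case: m_cases => -[-> ->] /negbTE -> /=; rewrite ?orbF => /eqP.
Qed.

Lemma indegR'_le v : indeg R' v <= indeg R v.
Proof.
rewrite /indeg /R' -cats1 count_cat /= addn0.
rewrite [X in _ <= X](count_split _ (fun e : V * V => e.1 != r)) leq_add2l.
case: eqP => // Ev; rewrite -has_count; apply/hasP; exists (r, m2).
  by rewrite mem_filter /= negbK eqxx rm2.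
by rewrite /= -Ev.
Qed.

Lemma indegR'_le2 v : indeg R' v <= 2.
Proof. exact: leq_trans (indegR'_le v) (indeg_le2 v). Qed.

Lemma indegR'_hyb v : 1 < indeg R' v -> hybR v.
Proof.
move=> H; rewrite /hybR eqn_leq indeg_le2 /=; exact: leq_trans H (indegR'_le v).
Qed.

Lemma lab_nr x : lab x != r.
Proof.
apply/eqP => E; have : exists y, lab y = lab x by exists x.
by move/leafP; rewrite E inr.
Qed.

End Net.

Lemma nth_mapI (T1 T2 : Type) (f : T1 -> T2) (s : seq T1) x1 x2 j :
  j < size s -> nth x2 (map f s) j = f (nth x1 s j).
Proof. exact: nth_map. Qed.

Lemma mem_restrict (V : finType) (T : seq (medge V)) Y i :
  on_updown T Y i -> edge_at T i \in restrict T Y.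
Proof.
move=> H; rewrite /restrict; apply: map_f; rewrite mem_filter mem_enum andbT.
exact/asboolP.
Qed.

Lemma L1 (V : finType) (T : seq (medge V)) (Y : seq V) u v :
  (forall j, (edge_at T j).2 = false) -> u \in Y -> v \in Y ->
  connect (adj T) u v -> connect (adj (restrict T Y)) u v.
Proof.
move=> Hf uY vY; have [->|uv] := eqVneq u v; first by move=> _; exact: connect0.
move=> /connectP[p0 Hp0 Ev]; move: uv vY; rewrite Ev.
case: (shortenP Hp0) => p Hp Hu _ uv vY; clear Ev Hp0 p0.
have T0 : 0 < size T.
  clear vY; case: p Hp Hu uv => [|y p] /=; first by rewrite eqxx.
  case/andP => /hasP[e eT _] _ _ _.
  by case: T Hf eT.
pose x0 := Ordinal T0.
have Hadj : forall x y, adj T x y -> exists i, incident (edge_at T i) x y.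
  move=> x y /hasP[e eT He].
  have ie : index e T < size T by rewrite index_mem.
  exists (Ordinal ie); rewrite /edge_at (tnth_nth e) /= nth_index //.
pose es := mkseq (fun j => odflt x0 [pick i | incident (edge_at T i) (nth u (u :: p) j) (nth u p j)]) (size p).
have Hes : forall j, j < size p -> incident (edge_at T (nth x0 es j)) (nth u (u :: p) j) (nth u p j).
  move=> j jp; rewrite nth_mkseq //; case: pickP => [i //|none] /=.
  have [i Hi] := Hadj _ _ ((pathP u Hp) j jp).
  by move: (none i); rewrite Hi.
have Hup : updown_path T u (last u p) p es.
  split => //; first by rewrite /es size_mkseq.
    move=> j jp; rewrite (nth_map x0); last by rewrite /es size_mkseq.
    exact: Hes.
  move=> j k /andP[jk kp]; rewrite /step_down (nth_map x0) ?Hf //.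
  by rewrite /es size_mkseq; exact: ltn_trans jk kp.
apply/connectP; exists p => //; apply/(pathP u) => j jp.
apply/hasP; exists (edge_at T (nth x0 es j)); last exact: Hes.
apply: mem_restrict; exists u, (last u p), p, es; split => //.
by rewrite mem_nth // /es size_mkseq.
Qed.

Section Abs.
Variables (V : finType) (G : seq (medge V)) (r m1 : V) (arcA : rel V).
Local Notation hd k := (edge_at G k).1.2.
Local Notation tl k := (edge_at G k).1.1.
Local Notation dr k := (edge_at G k).2.

Hypothesis H1 : forall v, #|[set k : 'I_(size G) | hd k == v]| <= 2.
Hypothesis H2 : forall k1 k2 : 'I_(size G), k1 != k2 -> hd k1 = hd k2 -> dr k1.
Hypothesis H3a : forall k, arcA (tl k) (hd k).
Hypothesis H3 : forall k, ~~ connect arcA (hd k) (tl k).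
Hypothesis H4 : forall k, tl k != r.
Hypothesis H5 : forall v, v != r -> (forall k, hd k != v) -> v = m1.

Lemma hybridE v : hybrid_node G v = (#|[set k | dr k && (hd k == v)]| == 2).
Proof. by rewrite /hybrid_node count_card. Qed.

Lemma three k1 k2 k3 : k1 != k2 -> k1 != k3 -> k2 != k3 -> hd k1 = hd k2 -> hd k1 = hd k3 -> False.
Proof.
move=> n12 n13 n23 e12 e13.
have : #|[:: k1; k2; k3]| <= 2.
  apply: leq_trans (H1 (hd k1)); apply: subset_leq_card; apply/subsetP => k.
  rewrite !inE => /or3P[]/eqP->; [by rewrite eqxx | by rewrite e12 | by rewrite e13].
have U : uniq [:: k1; k2; k3] by rewrite /= !inE negb_or n12 n13 n23.
by rewrite (card_uniqP U).
Qed.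

Lemma hyb_two k1 k2 : k1 != k2 -> hd k1 = hd k2 -> hybrid_node G (hd k1).
Proof.
move=> n12 e12; rewrite hybridE eqn_leq; apply/andP; split.
  apply: leq_trans (H1 (hd k1)); apply: subset_leq_card; apply/subsetP => k.
  by rewrite !inE => /andP[_ ->].
have d1 := H2 n12 e12.
have d2 : dr k2 by apply: (@H2 k2 k1); rewrite // eq_sym.
have <- : #|[set k1; k2]| = 2 by rewrite cards2 n12.
apply: subset_leq_card; apply/subsetP => k.
by rewrite !inE => /orP[]/eqP->; rewrite ?d1 ?d2 ?e12 eqxx.
Qed.

Lemma valid_elem D k : valid_del G D -> k \in D -> dr k && hybrid_node G (hd k).
Proof. by case/andP => /forallP /(_ k) /implyP H _ /H. Qed.

Lemma valid_one D v : valid_del G D -> hybrid_node G v -> #|[set i in D | hd i == v]| == 1.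
Proof. by case/andP => _ /forallP /(_ v) /implyP H /H. Qed.

Lemma valid_pick D v : valid_del G D -> hybrid_node G v -> exists2 k, k \in D & hd k = v.
Proof.
move=> vD hv; case/cards1P: (valid_one vD hv) => k Ek.
have : k \in [set i in D | hd i == v] by rewrite Ek set11.
by rewrite inE => /andP[kD /eqP hk]; exists k.
Qed.

Lemma valid_uniq D k k' : valid_del G D -> k \in D -> k' \in D -> hd k = hd k' -> k = k'.
Proof.
move=> vD kD k'D e; have /andP[_ hk] := valid_elem vD kD.
case/cards1P: (valid_one vD hk) => x Ex.
have : k \in [set i in D | hd i == hd k] by rewrite inE kD eqxx.
have : k' \in [set i in D | hd i == hd k] by rewrite inE k'D e eqxx.
by rewrite Ex !inE => /eqP -> /eqP ->.
Qed.

Lemma D1 D k1 k2 : valid_del G D -> k1 \notin D -> k2 \notin D -> hd k1 = hd k2 -> k1 = k2.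
Proof.
move=> vD n1 n2 e; apply/eqP; apply: contraT => ne.
have [k kD hk] := valid_pick vD (hyb_two ne e).
have n13 : k1 != k by apply: contraNneq n1 => ->.
have n23 : k2 != k by apply: contraNneq n2 => ->.
by case: (@three k1 k2 k ne n13 n23 e (esym hk)).
Qed.

Lemma in_notD D v : valid_del G D -> v != r -> v != m1 -> exists2 k, k \notin D & hd k = v.
Proof.
move=> vD vr vm.
have [/existsP[k /eqP hk]|none] := boolP [exists k, hd k == v]; last first.
  by move: vm; rewrite (H5 vr) ?eqxx // => k; apply: contraNneq none => E; apply/existsP; exists k; rewrite E.
have [kD|kD] := boolP (k \in D); last by exists k.
have /andP[_ hyb] := valid_elem vD kD.
move: hyb; rewrite hybridE => /cards2P[x [y [xy Exy]]].
have [k' [k'k k'in]] : exists k', k' != k /\ k' \in [set x; y].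
  have [Exk|xk] := eqVneq x k.
    by exists y; split; [rewrite -Exk eq_sym | rewrite !inE eqxx orbT].
  by exists x; split; [exact: xk | rewrite !inE eqxx].
move: k'in; rewrite -Exy inE => /andP[_ /eqP hk'].
exists k'; last by rewrite hk'.
apply/negP => k'D; move/eqP: k'k; apply; exact: (valid_uniq vD k'D kD).
Qed.

Lemma D2 D v : valid_del G D -> v != r -> connect (cadj (edge_at G) (fun k => k \notin D)) v m1.
Proof.
move=> vD.
suff H : forall N v, #|[set u | connect arcA u v]| <= N -> v != r ->
   connect (cadj (edge_at G) (fun k => k \notin D)) v m1 by apply: H.
elim=> [|N IH] {}v.
  by rewrite leqn0 => /eqP /cards0_eq /setP /(_ v); rewrite !inE connect0.
move=> HN vr; have [->|vm] := eqVneq v m1; first exact: connect0.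
have [k kD hk] := in_notD vD vr vm.
have Hp : connect (cadj (edge_at G) (fun k => k \notin D)) (tl k) m1.
  apply: IH (H4 k); rewrite -ltnS; apply: leq_trans HN; apply: proper_card.
  apply/properP; split.
    apply/subsetP => u; rewrite !inE => H; apply: connect_trans H _.
    by rewrite -hk; exact: connect1.
  by exists v; rewrite !inE ?connect0 // -hk; exact: H3.
apply: connect_trans Hp; apply: connect1; apply/existsP; exists k.
by rewrite kD /incident hk !eqxx orbT.
Qed.

Lemma Dconn D x y : valid_del G D -> x != r -> y != r ->
  connect (cadj (edge_at G) (fun k => k \notin D)) x y.
Proof.
move=> vD xr yr; apply: connect_trans (D2 vD xr) _.
by rewrite connS; exact: D2.
Qed.

End Abs.

Section Abs2.
Variables (V : finType) (G : seq (medge V)) (r m1 : V) (arcA : rel V).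
Local Notation hd k := (edge_at G k).1.2.
Local Notation tl k := (edge_at G k).1.1.
Local Notation dr k := (edge_at G k).2.

Hypothesis H1 : forall v, #|[set k : 'I_(size G) | hd k == v]| <= 2.
Hypothesis H2 : forall k1 k2 : 'I_(size G), k1 != k2 -> hd k1 = hd k2 -> dr k1.
Hypothesis H3a : forall k, arcA (tl k) (hd k).
Hypothesis H3 : forall k, ~~ connect arcA (hd k) (tl k).
Hypothesis H4 : forall k, tl k != r.
Hypothesis H5 : forall v, v != r -> (forall k, hd k != v) -> v = m1.

Lemma D3 D (i0 : 'I_(size G)) a b p es :
  valid_del G D ->
  updown_path (display G D) a b p es ->
  updown_path G a b p [seq nth i0 [seq i <- enum 'I_(size G) | i \notin D] j | j : 'I_(size (display G D)) <- es].
Proof.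
move=> vD [uq lst sz inc ud].
set sD := [seq i <- enum 'I_(size G) | i \notin D].
set T := display G D.
have eT : forall j : 'I_(size T), edge_at T j =
   ((edge_at G (nth i0 sD j)).1.1, (edge_at G (nth i0 sD j)).1.2, false).
  move=> j; exact: (edge_at_map i0 j).
have nD : forall j : 'I_(size T), nth i0 sD j \notin D.
  have sT : size T = size sD := size_map _ _.
  move=> j; have : nth i0 sD j \in sD.
    by apply: mem_nth; rewrite -sT; exact: ltn_ord.
  by rewrite mem_filter => /andP[].
case Hes: es sz inc ud => [|x0 es'] sz inc ud.
  split => //; try (by move=> j; rewrite -sz); try (by move=> j k /andP[_]; rewrite -sz).
rewrite -Hes in sz inc ud *.
pose ej j := edge_at G (nth i0 sD (nth x0 es j)).
pose xs j := nth a (a :: p) j.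
have nthG : forall j, j < size p ->
    nth (a, a, false) [seq edge_at G i | i <- [seq nth i0 sD j | j : 'I_(size T) <- es]] j = ej j.
  move=> j jp; rewrite (nth_map i0) ?size_map ?sz // (nth_map x0) ?sz //.
have incG : forall j, j < size p -> incident (ej j) (xs j) (xs j.+1).
  move=> j jp; have := inc j jp; rewrite (nth_map x0) ?sz // eT.
  by rewrite /incident /=.
have uniqx : forall i i', i <= size p -> i' <= size p -> xs i = xs i' -> i = i'.
  move=> i i' ip i'p E; apply/eqP; rewrite -(@nth_uniq _ a (a :: p)) //=.
  by move: E; rewrite /xs => ->.
have Dn : forall j j', j < size p -> j' < size p -> (ej j).1.2 = (ej j').1.2 -> ej j = ej j'.
  move=> j j' jp j'p E.
  have jT : nth x0 es j < size T by exact: ltn_ord.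
  by rewrite /ej (D1 H1 H2 vD (nD _) (nD _) E).
have down : forall j, j < size p -> (ej j).2 && ((ej j).1.1 == xs j) ->
    forall m, j <= m < size p -> (ej m).1.1 = xs m /\ (ej m).1.2 = xs m.+1.
  move=> j jp /andP[_ /eqP tj]; elim=> [|m IH].
    rewrite leqn0 => /andP[/eqP j0 mp]; subst j.
    case/incidentP: (incG 0 jp) => -[E1 E2] //.
    by move: (uniqx 0 1 (leq0n _) mp); rewrite -tj => /(_ E1).
  case/andP; rewrite leq_eqVlt => /orP[/eqP jm mp|jm mp].
    subst j; case/incidentP: (incG _ jp) => -[E1 E2] //.
    by have := uniqx _ _ (ltnW jp) jp; rewrite -tj => /(_ E1); lia.
  have [IH1 IH2] := IH (introT andP (conj jm (ltnW mp))).
  case/incidentP: (incG _ mp) => -[E1 E2] //.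
  have Ee := Dn _ _ (ltnW mp) mp (etrans IH2 (esym E2)).
  rewrite Ee in IH1.
  by have := uniqx m m.+2 (ltnW (ltnW mp)) mp (etrans (esym IH1) E1); lia.
split => //; first by rewrite size_map.
  by move=> j jp; rewrite nthG //; exact: incG.
move=> j k /andP[jk kp]; rewrite !nthG //; last exact: ltn_trans jk kp.
apply/negP => /andP[sd /andP[_ /eqP hk]].
have [_ E2] := down j (ltn_trans jk kp) sd k (introT andP (conj (ltnW jk) kp)).
by have := uniqx k k.+1 (ltnW kp) kp (etrans (esym hk) E2); lia.
Qed.

End Abs2.

Section Abs3.
Variables (V : finType) (G : seq (medge V)) (r m1 : V) (arcA : rel V).
Local Notation hd k := (edge_at G k).1.2.
Local Notation tl k := (edge_at G k).1.1.
Local Notation dr k := (edge_at G k).2.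

Hypothesis H1 : forall v, #|[set k : 'I_(size G) | hd k == v]| <= 2.
Hypothesis H2 : forall k1 k2 : 'I_(size G), k1 != k2 -> hd k1 = hd k2 -> dr k1.
Hypothesis H3a : forall k, arcA (tl k) (hd k).
Hypothesis H3 : forall k, ~~ connect arcA (hd k) (tl k).
Hypothesis H4 : forall k, tl k != r.
Hypothesis H5 : forall v, v != r -> (forall k, hd k != v) -> v = m1.

Variables (a b c d : V) (i0 : 'I_(size G)).
Hypotheses (ar : a != r) (br : b != r) (cr : c != r) (dr' : d != r).

Local Notation Q := [:: a; b; c; d].
Local Notation S k := `[< on_updown G Q k >].
Local Notation s := [seq i <- enum 'I_(size G) | `[< on_updown G Q i >]].
Local Notation M := (restrict G Q).

Definition sig (j : 'I_(size M)) : 'I_(size G) := nth i0 s j.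
Definition HMk (k : 'I_(size G)) := hybrid_node M (hd k).
Definition restr (D : {set 'I_(size G)}) : {set 'I_(size M)} :=
  [set j | (sig j \in D) && HMk (sig j)].
Definition Hp (D : {set 'I_(size G)}) (k : 'I_(size G)) := S k && ~~ ((k \in D) && HMk k).

Lemma sizeM : size M = size s. Proof. exact: size_map. Qed.

Lemma uniq_s : uniq s.
Proof. apply: filter_uniq; exact: enum_uniq. Qed.

Lemma sig_inj : injective sig.
Proof.
move=> j j' E; apply/val_inj/eqP.
rewrite -(@nth_uniq _ i0 s) ?uniq_s -?sizeM ?ltn_ord //.
by rewrite /sig in E; rewrite E.
Qed.

Lemma sig_in j : sig j \in s.
Proof. by apply: mem_nth; rewrite -sizeM. Qed.

Lemma sig_S j : S (sig j).
Proof. by have := sig_in j; rewrite mem_filter => /andP[]. Qed.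

Lemma sig_surj k : S k -> exists j, sig j = k.
Proof.
move=> Sk; have ks : k \in s by rewrite mem_filter Sk mem_enum.
have ik : index k s < size M by rewrite sizeM index_mem.
by exists (Ordinal ik); rewrite /sig /= nth_index.
Qed.

Lemma edge_atM j : edge_at M j = edge_at G (sig j).
Proof. exact: (edge_at_map i0 j). Qed.

Lemma hybM v : hybrid_node M v = (#|[set k | S k && dr k && (hd k == v)]| == 2).
Proof.
rewrite /hybrid_node /restrict count_map count_filter count_enumP cardsE.
congr (_ == _); apply: eq_card => k; rewrite !inE /=.
by rewrite andbC andbA.
Qed.

Lemma hybM2 v : hybrid_node M v -> exists k1 k2, [/\ k1 != k2,
   forall k, (S k && dr k && (hd k == v)) = (k \in [set k1; k2]), hd k1 = v & hd k2 = v].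
Proof.
rewrite hybM => /cards2P[x [y [xy Exy]]]; exists x, y; split => //.
- by move=> k; rewrite -Exy inE.
- have : x \in [set x; y] by rewrite !inE eqxx.
  by rewrite -Exy inE => /andP[_ /eqP].
- have : y \in [set x; y] by rewrite !inE eqxx orbT.
  by rewrite -Exy inE => /andP[_ /eqP].
Qed.

Lemma E1 D k1 k2 : valid_del G D -> Hp D k1 -> Hp D k2 -> hd k1 = hd k2 -> k1 = k2.
Proof.
move=> vD /andP[S1 n1] /andP[S2 n2] e; apply/eqP; apply: contraT => ne.
have d1 := H2 ne e.
have d2 : dr k2 by apply: (@H2 k2 k1); rewrite // eq_sym.
have hm : HMk k1.
  rewrite /HMk hybM eqn_leq; apply/andP; split.
    apply: leq_trans (H1 (hd k1)); apply: subset_leq_card; apply/subsetP => k.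
    by rewrite !inE => /andP[_ ->].
  have <- : #|[set k1; k2]| = 2 by rewrite cards2 ne.
  apply: subset_leq_card; apply/subsetP => k.
  by rewrite !inE => /orP[]/eqP->; rewrite ?S1 ?S2 ?d1 ?d2 ?e eqxx.
have hm2 : HMk k2 by rewrite /HMk -e.
rewrite hm andbT in n1; rewrite hm2 andbT in n2.
by rewrite (D1 H1 H2 vD n1 n2 e) eqxx in ne.
Qed.

Lemma bridge (F : pred 'I_(size G)) :
  (forall k1 k2, F k1 -> F k2 -> hd k1 = hd k2 -> k1 = k2) ->
  forall k0, F k0 -> exists s0 : V -> bool,
    (forall k, F k -> k != k0 -> s0 (tl k) = s0 (hd k)) /\ s0 (tl k0) != s0 (hd k0).
Proof.
move=> Fu k0 Fk0.
pose arcF : rel V := fun u v => [exists k, [&& F k, k != k0, tl k == u & hd k == v]].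
exists (fun x => connect arcF (hd k0) x); split.
  move=> k Fk kk0; apply/idP/idP => H.
    apply: connect_trans H _; apply: connect1; apply/existsP; exists k.
    by rewrite Fk kk0 !eqxx.
  have [E|ne] := eqVneq (hd k0) (hd k).
    by move/eqP: kk0; case; apply: Fu.
  have [z Hz /existsP[k'' /and4P[Fk'' _ /eqP tz /eqP hz]]] := connect_last H ne.
  by rewrite -(Fu _ _ Fk'' Fk hz) tz.
rewrite connect0 /=; apply/negP => /eqP H; move/negP: (H3 k0); apply.
apply: (connect_sub _ H) => u v /existsP[k /and4P[_ _ /eqP <- /eqP <-]].
exact/connect1/H3a.
Qed.

Lemma Q_nr x : x \in Q -> x != r.
Proof. by rewrite !inE => /or4P[]/eqP->. Qed.

Lemma perD D : valid_del G D ->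
  has_split (restrict (display G D) Q) a b c d = has_split (display M (restr D)) a b c d.
Proof.
move=> vD.
set sD := [seq i <- enum 'I_(size G) | i \notin D].
set T := display G D.
pose g (k : 'I_(size G)) : medge V := (tl k, hd k, false).
pose tau (j : 'I_(size T)) := nth i0 sD j.
have sT : size T = size sD := size_map _ _.
have uD : uniq sD by apply: filter_uniq; exact: enum_uniq.
have tau_inj : injective tau.
  move=> j j' E; apply/val_inj/eqP; rewrite -(@nth_uniq _ i0 sD) -?sT ?ltn_ord //.
  by rewrite /tau in E; rewrite E.
have eT : forall j, edge_at T j = g (tau j) := fun j => edge_at_map i0 j.
pose tP := [seq tau j | j <- [seq j <- enum 'I_(size T) | `[< on_updown T Q j >]]].
have RT : restrict T Q = map g tP.
  by rewrite /restrict /tP -map_comp; apply: eq_map => j /=; rewrite eT.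
have uP : uniq tP.
  by rewrite map_inj_uniq // filter_uniq // enum_uniq.
pose tH := [seq sig j | j <- [seq j <- enum 'I_(size M) | j \notin restr D]].
have RH : display M (restr D) = map g tH.
  by rewrite /display /tH -map_comp; apply: eq_map => j /=; rewrite edge_atM.
have uH : uniq tH by rewrite (map_inj_uniq sig_inj) filter_uniq // enum_uniq.
rewrite RT RH !has_split_map //.
have memH : forall k, (k \in tH) = Hp D k.
  move=> k; apply/mapP/idP => [[j]|].
    rewrite mem_filter mem_enum andbT inE => nj ->.
    by rewrite /Hp sig_S.
  case/andP => Sk nk; have [j Ej] := sig_surj Sk.
  by exists j => //; rewrite mem_filter mem_enum andbT inE Ej.
rewrite [RHS](@hsP_ext _ _ g g _ (Hp D)) //.
have conn : forall x y, x \in Q -> y \in Q -> connect (cadj g (fun k => k \in tP)) x y.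
  move=> x y xQ yQ.
  have H0 := Dconn H3a H3 H4 H5 vD (Q_nr xQ) (Q_nr yQ).
  have HT : connect (adj T) x y.
    have -> : T = map g sD by [].
    rewrite (eq_connect (adj_map g sD)).
    move: H0; apply: (@cadj_mono _ _ g (fun k => k \notin D)) => k.
    by rewrite mem_filter mem_enum andbT.
  have := L1 (fun j => (f_equal snd (eT j))) xQ yQ HT.
  by rewrite RT (eq_connect (adj_map g tP)).
symmetry; apply: sandwich.
- move=> k /mapP[j]; rewrite mem_filter mem_enum andbT.
  move=> /asboolP[a' [b' [p [es [a'Q b'Q ab Hup jes]]]]] ->.
  apply/andP; split.
    apply/asboolP; exists a', b', p, [seq tau j | j : 'I_(size T) <- es]; split => //.
      exact: (D3 H1 H2 i0 vD Hup).
    exact: map_f.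
  have : tau j \in sD by apply: mem_nth; rewrite -sT.
  by rewrite mem_filter => /andP[nD _]; rewrite (negbTE nD).
- by apply: conn; rewrite !inE eqxx ?orbT.
- by apply: conn; rewrite !inE eqxx ?orbT.
- by apply: conn; rewrite !inE eqxx ?orbT.
- move=> k0 Hk0; exact: (bridge (fun k1 k2 Hk1 Hk2 => E1 vD Hk1 Hk2) Hk0).
Qed.


Definition lift (D' : {set 'I_(size M)}) : {set 'I_(size G)} := [set sig j | j in D'].
Definition HMset : {set 'I_(size G)} := [set k | S k && HMk k].
Definition phi (D2 : {set 'I_(size M)}) (D : {set 'I_(size G)}) := (D :\: HMset) :|: lift D2.
Definition fib (D' : {set 'I_(size M)}) :=
  [set D : {set 'I_(size G)} | valid_del G D && (restr D == D')].

Lemma validM_elem D' j : valid_del M D' -> j \in D' -> dr (sig j) && HMk (sig j).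
Proof. by case/andP => /forallP /(_ j) /implyP H _ /H; rewrite edge_atM. Qed.

Lemma validM_one D' v : valid_del M D' -> hybrid_node M v ->
  #|[set j in D' | hd (sig j) == v]| == 1.
Proof.
case/andP => _ /forallP /(_ v) /implyP H /H.
have -> : [set j in D' | hd (sig j) == v] = [set j in D' | (edge_at M j).1.2 == v] => //.
by apply/setP => j; rewrite !inE edge_atM.
Qed.

Lemma hybM_hybG v : hybrid_node M v -> hybrid_node G v.
Proof.
case/hybM2 => k1 [k2 [ne _ h1 h2]].
by rewrite -h1; apply: (hyb_two H1 H2 ne); rewrite h1 h2.
Qed.

Lemma hybM_in v k : hybrid_node M v -> dr k -> hd k = v -> S k.
Proof.
case/hybM2 => k1 [k2 [ne Hs h1 h2]] dk hk.
have [E1'|n1] := eqVneq k k1.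
  by have := Hs k1; rewrite !inE eqxx /= => /andP[/andP[]]; rewrite E1'.
have [E2'|n2] := eqVneq k k2.
  by have := Hs k2; rewrite !inE eqxx orbT /= => /andP[/andP[]]; rewrite E2'.
exfalso; apply: (@three _ _ H1 k1 k2 k ne); rewrite ?h1 ?h2 ?hk // eq_sym //.
Qed.

Lemma restr_valid D : valid_del G D -> valid_del M (restr D).
Proof.
move=> vD; apply/andP; split.
  apply/forallP => j; apply/implyP; rewrite inE => /andP[jD hm]; rewrite edge_atM.
  by have /andP[-> _] := valid_elem vD jD.
apply/forallP => v; apply/implyP => hv.
have hG := hybM_hybG hv; have [k kD hk] := valid_pick vD hG.
have /andP[dk _] := valid_elem vD kD.
have Sk := hybM_in hv dk hk.
have [j0 Ej0] := sig_surj Sk.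
apply/cards1P; exists j0; apply/setP => j; rewrite !inE edge_atM.
apply/idP/eqP => [/andP[/andP[sD hm] /eqP hj]|->].
  apply: sig_inj; rewrite Ej0; apply: (valid_uniq vD sD kD); by rewrite hj hk.
by rewrite Ej0 kD /HMk hk hv eqxx.
Qed.

Lemma lift_HM D' : valid_del M D' -> lift D' \subset HMset.
Proof.
move=> vM; apply/subsetP => k /imsetP[j jD ->]; rewrite inE sig_S.
by have /andP[_ ->] := validM_elem vM jD.
Qed.

Lemma DHM D : D :&: HMset = lift (restr D).
Proof.
apply/setP => k; rewrite !inE; apply/idP/imsetP.
  case/andP => kD /andP[Sk hm]; have [j Ej] := sig_surj Sk.
  by exists j => //; rewrite inE Ej kD hm.
by case => j; rewrite inE => /andP[jD hm] ->; rewrite jD sig_S hm.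
Qed.

Lemma phi_valid D D2 : valid_del G D -> valid_del M D2 -> valid_del G (phi D2 D).
Proof.
move=> vD vM; apply/andP; split.
  apply/forallP => k; apply/implyP; rewrite !inE => /orP[/andP[_ kD]|].
    exact: valid_elem vD kD.
  case/imsetP => j jD ->; have /andP[dj hm] := validM_elem vM jD.
  by rewrite dj (hybM_hybG hm).
apply/forallP => v; apply/implyP => hv.
have [hmv|hmv] := boolP (hybrid_node M v).
  have -> : [set i in phi D2 D | hd i == v] = sig @: [set j in D2 | hd (sig j) == v].
    apply/setP => k; rewrite !inE; apply/idP/imsetP.
      case/andP => /orP[/andP[nH kD]|/imsetP[j jD ->]] /eqP hk.
        exfalso; move: nH; have /andP[dk _] := valid_elem vD kD.
        by rewrite (hybM_in hmv dk hk) /HMk hk hmv.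
      by exists j; rewrite // inE jD hk eqxx.
    by case=> j; rewrite inE => /andP[jD /eqP hj] ->; rewrite imset_f // orbT hj eqxx.
  by rewrite card_imset; [exact: validM_one | exact: sig_inj].
have -> : [set i in phi D2 D | hd i == v] = [set i in D | hd i == v].
  apply/setP => k; rewrite !inE; apply/idP/idP.
    case/andP => /orP[/andP[_ ->]//|/imsetP[j jD ->]] /eqP hk.
    have /andP[_ hm] := validM_elem vM jD.
    by move: hmv; rewrite -hk; move: hm; rewrite /HMk => ->.
  case/andP => kD hk; rewrite kD hk andbT; apply/orP; left.
  by rewrite negb_and /HMk (eqP hk) (negbTE hmv) orbT.
exact: valid_one vD hv.
Qed.

Lemma restr_phi D D2 : valid_del M D2 -> restr (phi D2 D) = D2.
Proof.
move=> vM; apply/setP => j; rewrite !inE; apply/idP/idP.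
  case/andP => H hm; move: H => /orP[/andP[nH _]|].
    by move: nH; rewrite sig_S hm.
  by rewrite (mem_imset _ _ sig_inj).
move=> jD; rewrite (mem_imset _ _ sig_inj) jD orbT /=.
by have /andP[_ ->] := validM_elem vM jD.
Qed.

Lemma recon D D1 D2 : restr D = D1 -> valid_del M D2 ->
  D = (phi D2 D :\: HMset) :|: lift D1.
Proof.
move=> rD vM; apply/setP => k.
have L1' : (k \in lift D1) = (k \in D) && (k \in HMset) by rewrite -rD -DHM inE.
have L2' : k \in lift D2 -> k \in HMset by move=> H; apply: (subsetP (lift_HM vM)).
rewrite /phi !(in_setU, in_setD) L1'.
case: (boolP (k \in HMset)) => hk; rewrite /= ?andbT ?orbF //.
rewrite andbF orbF; case: (boolP (k \in lift D2)) => h2; rewrite ?orbF //.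
by rewrite (L2' h2) in hk.
Qed.

Lemma fib_le D1 D2 : valid_del M D1 -> valid_del M D2 -> #|fib D1| <= #|fib D2|.
Proof.
move=> vM1 vM2.
rewrite -(@card_in_imset _ _ (phi D2) (fib D1)).
  apply: subset_leq_card; apply/subsetP => X /imsetP[D]; rewrite inE => /andP[vD _] ->.
  by rewrite inE phi_valid // restr_phi // eqxx.
move=> D D'; rewrite !inE => /andP[vD /eqP rD] /andP[vD' /eqP rD'] E.
by rewrite (recon rD vM2) (recon rD' vM2) E.
Qed.


Lemma exists_valid : exists D0, valid_del G D0.
Proof.
exists [set k | [&& dr k, hybrid_node G (hd k) &
                  [forall k', (dr k' && (hd k' == hd k)) ==> (k <= k')]]].
apply/andP; split.
  by apply/forallP => k; apply/implyP; rewrite inE => /and3P[-> -> _].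
apply/forallP => v; apply/implyP => hv.
move: (hv); rewrite hybridE => /cards2P[x [y [xy Exy]]].
have memd : forall k, (dr k && (hd k == v)) = (k \in [set x; y]).
  by move=> k; rewrite -Exy inE.
have [m [dm hm mmin]] : exists m, [/\ dr m, hd m = v &
    forall k, dr k -> hd k = v -> m <= k].
  have hx := memd x; rewrite !inE eqxx /= in hx; case/andP: hx => dx /eqP hx.
  have hy := memd y; rewrite !inE eqxx orbT /= in hy; case/andP: hy => dy /eqP hy.
  case: (leqP x y) => Hxy; [exists x | exists y]; split => // k dk hk;
    have := memd k; rewrite dk hk eqxx !inE => /esym /orP[]/eqP -> //; exact: ltnW.
apply/cards1P; exists m; apply/setP => k; rewrite !inE.
apply/idP/eqP => [/andP[/and3P[dk _ /forallP mk] /eqP hk]|->].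
  apply/val_inj/eqP; rewrite eqn_leq mmin // andbT.
  by have := mk m; rewrite dm hm hk eqxx /=.
rewrite dm hm hv eqxx /= andbT; apply/forallP => k'; apply/implyP => /andP[dk /eqP hk].
exact: mmin.
Qed.

Import GRing.Theory Num.Theory.
Local Open Scope ring_scope.

Lemma sum_const_pred (R : nmodType) (T : finType) (P : pred T) (x : R) :
  \sum_(i | P i) x = x *+ #|P|.
Proof. exact: sumr_const. Qed.

Lemma sum_restr (R : nmodType) (F : {set 'I_(size M)} -> R) D0 :
  valid_del G D0 ->
  \sum_(D | valid_del G D) F (restr D) =
  \sum_(D' | valid_del M D') F D' *+ #|fib (restr D0)|.
Proof.
move=> vD0.
have cst : forall D', valid_del M D' -> #|fib D'| = #|fib (restr D0)|.
  move=> D' vD'; apply/eqP; rewrite eqn_leq !fib_le //; exact: restr_valid.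
rewrite (partition_big restr (fun D' => valid_del M D')) /=; last exact: restr_valid.
apply: eq_bigr => D' vD'.
rewrite (eq_bigr (fun _ => F D')); last by move=> D /andP[_ /eqP ->].
rewrite (eq_bigl (fun D => D \in fib D')); last by move=> D; rewrite inE.
by rewrite sumr_const cst.
Qed.

Theorem abs_main :
  rho_tilde M a b c d = (mu G)%:R^-1 *
    \sum_(D : {set 'I_(size G)} | valid_del G D) rho (restrict (display G D) Q) a b c d.
Proof.
have [D0 vD0] := exists_valid.
set cc := #|fib (restr D0)|.
have cc0 : (cc%:R : rat) != 0.
  rewrite pnatr_eq0 -lt0n; apply/card_gt0P; exists D0; by rewrite inE vD0 eqxx.
have e1 : \sum_(D | valid_del G D) rho (restrict (display G D) Q) a b c d =
          \sum_(D | valid_del G D) (fun D' => rho (display M D') a b c d) (restr D).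
  by apply: eq_bigr => D vD; rewrite /rho perD.
have muG : ((mu G)%:R : rat) = (mu M)%:R * cc%:R.
  have := sum_restr (fun _ => (1 : rat)) vD0.
  rewrite !sum_const_pred /mu => E.
  rewrite !cardsE E mulr_natl; reflexivity.
rewrite e1 (sum_restr (fun D' => rho (display M D') a b c d) vD0) muG /rho_tilde.
rewrite [X in _ = _ * X](eq_bigr (fun D' => rho (display M D') a b c d * cc%:R));
  last by move=> D' _; rewrite mulr_natr.
rewrite -big_distrl /=.
have mM0 : ((mu M)%:R : rat) != 0.
  rewrite pnatr_eq0 -lt0n /mu; apply/card_gt0P; exists (restr D0).
  by rewrite inE restr_valid.
field; by rewrite mM0 cc0.
Qed.

End Abs3.

Unset Implicit Arguments. Set Strict Implicit.
Local Open Scope ring_scope.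

Lemma nth_eqmap (T1 T2 : Type) (f : T1 -> T2) (s : seq T2) (t : seq T1) x0 y0 (j : nat) :
  s = map f t -> (j < size s)%N -> nth x0 s j = f (nth y0 t j).
Proof. by move=> -> jl; rewrite (nth_map y0) // -(size_map f). Qed.

Section Final.
Variables (X V : finType) (R : seq (V * V)) (r : V) (lab : X -> V).
Hypothesis Hnet : is_rooted_network R r lab.
Local Notation G := (sd_net R r).
Local Notation R2 := (R' R r).

Lemma sizeG : size G = size R2.
Proof. by rewrite sdE size_map. Qed.

Lemma eG (k : 'I_(size G)) : edge_at G k = fl R (nth (r, r) R2 k).
Proof.
rewrite /edge_at (tnth_nth (fl R (r, r))) /=.
apply: nth_eqmap; [exact: sdE | exact: ltn_ord].
Qed.

Lemma kR2 (k : 'I_(size G)) : nth (r, r) R2 k \in R2.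
Proof. by apply: mem_nth; rewrite -sizeG. Qed.

Lemma cardIn v : #|[set k : 'I_(size G) | (edge_at G k).1.2 == v]| = indeg R2 v.
Proof.
rewrite -(count_card G (fun e => e.1.2 == v)) sdE count_map.
by [].
Qed.

Lemma GH1 v : (#|[set k : 'I_(size G) | (edge_at G k).1.2 == v]| <= 2)%N.
Proof. rewrite cardIn; exact: (indegR'_le2 Hnet). Qed.

Lemma GH2 (k1 k2 : 'I_(size G)) : k1 != k2 ->
  (edge_at G k1).1.2 = (edge_at G k2).1.2 -> (edge_at G k1).2.
Proof.
move=> ne e.
have H : (1 < indeg R2 (edge_at G k1).1.2)%N.
  rewrite -cardIn; have <- : #|[set k1; k2]| = 2%N by rewrite cards2 ne.
  apply: subset_leq_card; apply/subsetP => k.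
  by rewrite !inE => /orP[]/eqP->; rewrite ?e eqxx.
have := indegR'_hyb Hnet H; by rewrite !eG.
Qed.

Lemma GH3a (k : 'I_(size G)) :
  Defs.arc R2 (edge_at G k).1.1 (edge_at G k).1.2.
Proof. by rewrite eG /= /Defs.arc -surjective_pairing kR2. Qed.

Lemma GH3 (k : 'I_(size G)) :
  ~~ connect (Defs.arc R2) (edge_at G k).1.2 (edge_at G k).1.1.
Proof.
apply: (R'_acyc Hnet); rewrite eG /= -surjective_pairing; exact: kR2.
Qed.

Lemma GH4 (k : 'I_(size G)) : (edge_at G k).1.1 != r.
Proof. by rewrite eG /=; case: (R'_nr Hnet (kR2 k)). Qed.

Lemma GH5 v : v != r -> (forall k : 'I_(size G), (edge_at G k).1.2 != v) -> v = m1 R r.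
Proof.
move=> vr Hk; apply: (R'_root Hnet vr) => u; apply/negP => uv.
have ij : (index (u, v) R2 < size G)%N by rewrite sizeG index_mem.
move: (Hk (Ordinal ij)); rewrite eG /= nth_index //.
by rewrite eqxx.
Qed.

Lemma G0 : (0 < size G)%N.
Proof. by rewrite sizeG /R' size_rcons. Qed.

End Final.

Theorem lemma3p2 (X V : finType) (R : seq (V * V)) (r : V) (lab : X -> V)
    (x y z w : X) :
  is_rooted_network R r lab -> (4 <= #|X|)%N -> uniq [:: x; y; z; w] ->
  let N := sd_net R r in
  let Q := [:: lab x; lab y; lab z; lab w] in
  rho_tilde (restrict N Q) (lab x) (lab y) (lab z) (lab w) =
  (mu N)%:R^-1 *
  \sum_(D : {set 'I_(size N)} | valid_del N D)
     rho (restrict (display N D) Q) (lab x) (lab y) (lab z) (lab w).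
Proof.
move=> Hnet _ _ N Q.
have H := (abs_main (@GH1 _ _ _ _ _ Hnet) (@GH2 _ _ _ _ _ Hnet) (@GH3a _ R r) (@GH3 _ _ _ _ _ Hnet)
          (@GH4 _ _ _ _ _ Hnet) (@GH5 _ _ _ _ _ Hnet)
          (Ordinal (@G0 _ R r)) (lab_nr Hnet x) (lab_nr Hnet y) (lab_nr Hnet z) (lab_nr Hnet w)).
exact H.
Qed.
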